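(* For every $L>0$, $n\ge1$ and $w\in\mathbb{R}$, $\mathcal{L}_{\mathrm{sig}}(w;D(\mathcal{F}^{+}_L))\ge\frac12\,\mathcal{L}_{\mathrm{sig}}(w;D(\mathcal{F}^{\mathrm{aff}}_L))$.
   Context: $(z)_+=\max(z,0)$; $\mathcal{U}^d$ is the uniform distribution on $\mathbb{S}^{d-1}$. $D(\mathcal{F}^{\mathrm{aff}}_L)$ is the distribution of $f(\mathbf{x})=l\,\mathbf{w}^\top\mathbf{x}+b$ with $\mathbf{w}\sim\mathcal{U}^d$, $l,b$ i.i.d. $\mathrm{Unif}([-L,L])$; $D(\mathcal{F}^+_L)$ is the distribution of $f(\mathbf{x})=l_1(\mathbf{w}^\top\mathbf{x})_++l_2(-\mathbf{w}^\top\mathbf{x})_++b$ with $\mathbf{w}\sim\mathcal{U}^d$ and $l_1,l_2,b$ i.i.d. $\mathrm{Unif}([-L,L])$ (all independent). For a task distribution $D$ and $w\in\mathbb{R}$, the signal term is $\mathcal{L}_{\mathrm{sig}}(w;D)=\mathbb{E}\Big[\Big(\frac{\sum_{i=1}^n(f(\mathbf{x}_i)-f(\mathbf{x}_{n+1}))e^{-w\|\mathbf{x}_i-\mathbf{x}_{n+1}\|^2}}{\sum_{j=1}^n e^{-w\|\mathbf{x}_j-\mathbf{x}_{n+1}\|^2}}\Big)^2\Big]$, where $f\sim D$ and $\mathbf{x}_1,\dots,\mathbf{x}_{n+1}$ i.i.d. $\sim\mathcal{U}^d$ independent of $f$. *)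

(* Defs.v *)
From HB Require Import structures.
From mathcomp Require Import all_boot all_order all_algebra.
From mathcomp Require Import all_classical all_reals all_analysis.
Set Implicit Arguments.
Unset Strict Implicit.
Unset Printing Implicit Defensive.
Import Order.TTheory GRing.Theory Num.Theory.
Import numFieldNormedType.Exports.
Local Open Scope classical_set_scope.
Local Open Scope ring_scope.

Section Defs.
Variable R : realType.

Definition dotp (d : nat) (u v : d.-tuple R) : R :=
  \sum_(i < d) tnth u i * tnth v i.
Definition sqnorm (d : nat) (u : d.-tuple R) : R := dotp u u.
Definition enorm (d : nat) (u : d.-tuple R) : R := Num.sqrt (sqnorm u).
Definition vsub (d : nat) (u v : d.-tuple R) : d.-tuple R :=
  [tuple tnth u i - tnth v i | i < d].
Definition vscale (d : nat) (c : R) (u : d.-tuple R) : d.-tuple R :=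
  [tuple c * tnth u i | i < d].

(* expectation of g(X_1,...,X_k) for X_1,...,X_k i.i.d. with expectation
   functional E (iterated integral; for nonnegative integrands this is the
   joint expectation by Tonelli) *)
Fixpoint iter_expect (T : Type) (E : (T -> \bar R) -> \bar R) (k : nat) :
    (k.-tuple T -> \bar R) -> \bar R :=
  match k with
  | 0 => fun g => g [tuple]
  | k'.+1 => fun g => E (fun x => iter_expect E (fun t => g (cons_tuple x t)))
  end.

Definition leb_int (d : nat) (g : d.-tuple R -> \bar R) : \bar R :=
  @iter_expect _ (fun h : R -> \bar R => (\int[lebesgue_measure]_x h x)%E) d g.

(* E_{u ~ U^d}[h(u)], U^d the uniform (normalized surface) measure on
   S^{d-1}, given as the normalized cone measure:
   (1/|B^d|) * \int_{0 < |x| <= 1} h(x/|x|) dx *)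
Definition sphere_expect (d : nat) (h : d.-tuple R -> \bar R) : \bar R :=
  (leb_int (fun x => if ((0 < enorm x) && (enorm x <= 1))%R
                     then h (vscale (enorm x)^-1%R x) else 0%E) *
   ((fine (leb_int (fun x : d.-tuple R => if (enorm x <= 1)%R then 1%E else 0%E)))^-1)%:E)%E.

Definition unif_expect (L : R) (h : R -> \bar R) : \bar R :=
  (((2 * L)^-1)%:E * \int[lebesgue_measure]_(t in [set t : R | (-L <= t <= L)%R]) h t)%E.

(* A task distribution D is represented by its expectation functional
   Phi |-> E_{f ~ D}[Phi f]. *)

Definition D_aff (d : nat) (L : R) (Phi : (d.-tuple R -> R) -> \bar R) : \bar R :=
  sphere_expect (fun wv => unif_expect L (fun l => unif_expect L (fun b =>
    Phi (fun x => l * dotp wv x + b)))).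

Definition D_plus (d : nat) (L : R) (Phi : (d.-tuple R -> R) -> \bar R) : \bar R :=
  sphere_expect (fun wv => unif_expect L (fun l1 => unif_expect L (fun l2 =>
    unif_expect L (fun b =>
    Phi (fun x => l1 * Num.max (dotp wv x) 0 + l2 * Num.max (- dotp wv x) 0 + b))))).

(* the squared signal error for a given f, context xs = (x_1..x_n), query q *)
Definition sig_err (d n : nat) (w : R) (f : d.-tuple R -> R)
    (xs : n.-tuple (d.-tuple R)) (q : d.-tuple R) : R :=
  ((\sum_(i < n) (f (tnth xs i) - f q) * expR (- w * sqnorm (vsub (tnth xs i) q)))
   / (\sum_(j < n) expR (- w * sqnorm (vsub (tnth xs j) q)))) ^+ 2.

Definition L_sig (d n : nat) (w : R)
    (D : ((d.-tuple R -> R) -> \bar R) -> \bar R) : \bar R :=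
  D (fun f => sphere_expect (fun q =>
       @iter_expect _ (@sphere_expect d) n (fun xs => (sig_err w f xs q)%:E))).

End Defs.

(* Main.v *)
Require Import Defs.
From HB Require Import structures.
From mathcomp Require Import all_boot all_order all_algebra.
From mathcomp Require Import all_classical all_reals all_analysis.
From mathcomp Require Import measurable_realfun lebesgue_integral_nonneg.
From mathcomp Require Import lra ring.
Import Order.TTheory GRing.Theory Num.Theory.
Import numFieldNormedType.Exports.
Local Open Scope classical_set_scope.
Local Open Scope ring_scope.
Local Open Scope ereal_scope.
Section S.
Variable R : realType.
Definition nonnegF {T : Type} (f : T -> \bar R) := forall t, 0 <= f t.

Record good {d} {T : measurableType d} (E : (T -> \bar R) -> \bar R) : Prop := Good {
 g_ge0 : forall f, nonnegF f -> 0 <= E f;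
 g_add : forall f g : T -> \bar R, measurable_fun [set: T] f -> measurable_fun [set: T] g -> nonnegF f -> nonnegF g ->
     E (fun t => f t + g t) = E f + E g;
 g_scale : forall k (f : T -> \bar R), (0 <= k)%R -> measurable_fun [set: T] f -> nonnegF f -> E (fun t => k%:E * f t) = k%:E * E f;
 g_le : forall f g : T -> \bar R, measurable_fun [set: T] f -> measurable_fun [set: T] g -> nonnegF f -> (forall t, f t <= g t) -> E f <= E g;
 g_meas : forall d' (X : measurableType d') (F : X * T -> \bar R), measurable_fun setT F -> nonnegF F ->
     measurable_fun setT (fun x => E (fun t => F (x, t)))
}.
Arguments g_ge0 {d T E}.
Arguments g_add {d T E}.
Arguments g_scale {d T E}.
Arguments g_le {d T E}.
Arguments g_meas {d T E}.

Lemma good_leb : good (fun h : R -> \bar R => \int[lebesgue_measure]_x h x).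
Proof.
constructor.
- by move=> f f0; apply: integral_ge0.
- by move=> h1 h2 m1 m2 h10 h20; apply: ge0_integralD.
- by move=> k f k0 mf f0; apply: ge0_integralZl_EFin.
- by move=> h1 h2 m1 m2 h10 h12; apply: ge0_le_integral.
- move=> d' X F mF F0.
  exact: (measurable_fun_fubini_tonelli_F (m2 := lebesgue_measure) F mF F0).
Qed.

Section trans.
Context d1 (T : measurableType d1) d2 (T' : measurableType d2).
Variables (E : (T -> \bar R) -> \bar R) (C : T -> bool) (phi : T -> T').
Hypotheses (gE : good E) (mC : measurable_fun [set: T] C) (mphi : measurable_fun [set: T] phi).

Let mh {h : T' -> \bar R} : measurable_fun [set: T'] h ->
  measurable_fun [set: T] (fun t => if C t then h (phi t) else 0).
Proof. by move=> mh; apply: measurable_fun_ifT => //; exact: measurableT_comp. Qed.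

Let nh {h : T' -> \bar R} : nonnegF h -> nonnegF (fun t => if C t then h (phi t) else 0).
Proof. by move=> h0 t; case: (C t). Qed.

Lemma good_trans : good (fun h : T' -> \bar R => E (fun t => if C t then h (phi t) else 0)).
Proof.
constructor.
- by move=> f f0; apply: (g_ge0 gE); exact: nh.
- move=> f g mf mg f0 g0; rewrite -(g_add gE _ _ (mh mf) (mh mg) (nh f0) (nh g0)).
  by congr E; apply/funext => t; case: (C t); rewrite ?adde0.
- move=> k f k0 mf f0; rewrite -(g_scale gE _ _ k0 (mh mf) (nh f0)).
  by congr E; apply/funext => t; case: (C t); rewrite ?mule0.
- move=> f g mf mg f0 fg; apply: (g_le gE _ _ (mh mf) (mh mg) (nh f0)).
  by move=> t; case: (C t).
- move=> d' X F mF F0.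
  apply: (@g_meas _ _ _ gE _ _ (fun p => if C p.2 then F (p.1, phi p.2) else 0)).
  + apply: measurable_fun_ifT.
    * exact: measurableT_comp.
    * apply: measurableT_comp mF _; apply: measurable_fun_pair => //.
      exact: measurableT_comp.
    * exact: measurable_cst.
  + by move=> p; case: (C p.2).
Qed.
End trans.

Lemma good_scaleR d (T : measurableType d) (E : (T -> \bar R) -> \bar R) (c : R) :
  good E -> (0 <= c)%R -> good (fun h => E h * c%:E).
Proof.
move=> gE c0; constructor.
- by move=> f f0; apply: mule_ge0; [exact: (g_ge0 gE)|rewrite lee_fin].
- move=> f g mf mg f0 g0; rewrite (g_add gE) // ge0_muleDl //; exact: (g_ge0 gE).
- by move=> k f k0 mf f0; rewrite (g_scale gE) // muleA.
- move=> f g mf mg f0 fg; apply: lee_wpmul2r; first by rewrite lee_fin.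
  by apply: (g_le gE).
- move=> d' X F mF F0.
  under eq_fun do rewrite muleC.
  by apply: measurable_funeM; exact: (g_meas gE).
Qed.

Lemma good_scaleL d (T : measurableType d) (E : (T -> \bar R) -> \bar R) (c : R) :
  good E -> (0 <= c)%R -> good (fun h => c%:E * E h).
Proof.
move=> gE c0; have := @good_scaleR _ _ _ c gE c0.
by under eq_fun do rewrite muleC.
Qed.

Section pair.
Context d1 (T1 : measurableType d1) d2 (T2 : measurableType d2).
Variables (E1 : (T1 -> \bar R) -> \bar R) (E2 : (T2 -> \bar R) -> \bar R).
Hypotheses (g1 : good E1) (g2 : good E2).

Let ms {f : T1 * T2 -> \bar R} x : measurable_fun [set: T1 * T2] f ->
  measurable_fun [set: T2] (fun y => f (x, y)).
Proof. by move=> mf; exact: measurable_fun_pair2. Qed.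

Let mo {f : T1 * T2 -> \bar R} : measurable_fun [set: T1 * T2] f -> nonnegF f ->
  measurable_fun [set: T1] (fun x => E2 (fun y => f (x, y))).
Proof. by move=> mf f0; exact: (g_meas g2). Qed.

Let no {f : T1 * T2 -> \bar R} : nonnegF f -> nonnegF (fun x => E2 (fun y => f (x, y))).
Proof. by move=> f0 x; apply: (g_ge0 g2) => y; exact: f0. Qed.

Lemma good_pair : good (fun G : T1 * T2 -> \bar R => E1 (fun x => E2 (fun y => G (x, y)))).
Proof.
constructor.
- by move=> f f0; apply: (g_ge0 g1); exact: no.
- move=> f g mf mg f0 g0; rewrite -(g_add g1 _ _ (mo mf f0) (mo mg g0) (no f0) (no g0)).
  congr E1; apply/funext => x.
  by rewrite (g_add g2 _ _ (ms x mf) (ms x mg) (fun y => f0 (x, y)) (fun y => g0 (x, y))).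
- move=> k f k0 mf f0; rewrite -(g_scale g1 _ _ k0 (mo mf f0) (no f0)).
  congr E1; apply/funext => x.
  by rewrite (g_scale g2 _ _ k0 (ms x mf) (fun y => f0 (x, y))).
- move=> f g mf mg f0 fg.
  have g0 : nonnegF g by move=> p; apply: le_trans (fg p); exact: f0.
  apply: (g_le g1 _ _ (mo mf f0) (mo mg g0) (no f0)).
  move=> x; exact: (g_le g2 _ _ (ms x mf) (ms x mg) (fun y => f0 (x, y)) (fun y => fg (x, y))).
- move=> d' X F mF F0.
  apply: (@g_meas _ _ _ g1 _ _ (fun p => E2 (fun y => F (p.1, (p.2, y))))).
  + apply: (@g_meas _ _ _ g2 _ _ (fun q => F (q.1.1, (q.1.2, q.2)))).
    * apply: measurableT_comp mF _; apply: measurable_fun_pair.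
      - exact: measurableT_comp.
      - apply: measurable_fun_pair => //; exact: measurableT_comp.
    * by move=> q; exact: F0.
  + by move=> p; apply: (g_ge0 g2) => y; exact: F0.
Qed.
End pair.

Lemma good_iter d (T : measurableType d) (E : (T -> \bar R) -> \bar R) :
  good E -> forall k, good (@iter_expect R T E k).
Proof.
move=> gE; elim=> [|k IH].
- constructor => //=.
  move=> d' X F mF F0; apply: measurableT_comp mF _.
  exact: measurable_fun_pair.
- have gp := @good_pair _ _ _ _ _ _ gE IH.
  have mc : measurable_fun [set: T * k.-tuple T] (fun p => cons_tuple p.1 p.2).
    exact: measurable_cons.
  exact: (@good_trans _ _ _ _ _ (fun _ => true) _ gp (measurable_cst true) mc).
Qed.


Lemma m_inv : measurable_fun [set: R] (@GRing.inv R).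
Proof.
rewrite (_ : GRing.inv = (fun x : R => if x == 0 then 0 else x^-1)%R); last first.
  by apply/funext => x; case: eqP => // ->; rewrite invr0.
apply: measurable_fun_if => //.
- exact: measurable_fun_eqr.
- rewrite setTI (_ : _ @^-1` _ = ~` [set 0%R]); last first.
    by apply/seteqP; split => x /=; case: eqP.
  apply: open_continuous_measurable_fun.
  + apply: closed_openC; apply: compact_closed; first exact: Rhausdorff.
    exact/finite_compact/finite_set1.
  + by move=> x; rewrite inE /= => /eqP x0; exact: inv_continuous.
Qed.

Section meas.
Context dY (Y : measurableType dY).

Lemma m_tnthf dT (T : measurableType dT) n (f : Y -> n.-tuple T) (i : 'I_n) :
  measurable_fun [set: Y] f -> measurable_fun [set: Y] (fun y => tnth (f y) i).
Proof. by move=> mf; exact: (measurableT_comp (measurable_tnth i) mf). Qed.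

Lemma m_dotp d (f g : Y -> d.-tuple R) : measurable_fun [set: Y] f -> measurable_fun [set: Y] g ->
  measurable_fun [set: Y] (fun y => dotp (f y) (g y)).
Proof.
move=> mf mg; rewrite /dotp; apply: measurable_sum => i.
by apply: measurable_funM; exact: m_tnthf.
Qed.

Lemma m_vsub d (f g : Y -> d.-tuple R) : measurable_fun [set: Y] f -> measurable_fun [set: Y] g ->
  measurable_fun [set: Y] (fun y => vsub (f y) (g y)).
Proof.
move=> mf mg; apply/measurable_fun_tnthP => i.
rewrite (_ : _ \o _ = fun y => tnth (f y) i - tnth (g y) i)%R; last first.
  by apply/funext => y /=; rewrite tnth_mktuple.
by apply: measurable_funB; exact: m_tnthf.
Qed.

Lemma m_vscale d (c : Y -> R) (f : Y -> d.-tuple R) : measurable_fun [set: Y] c -> measurable_fun [set: Y] f ->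
  measurable_fun [set: Y] (fun y => vscale (c y) (f y)).
Proof.
move=> mc mf; apply/measurable_fun_tnthP => i.
rewrite (_ : _ \o _ = fun y => c y * tnth (f y) i)%R; last first.
  by apply/funext => y /=; rewrite tnth_mktuple.
by apply: measurable_funM => //; exact: m_tnthf.
Qed.

Lemma m_enorm d (f : Y -> d.-tuple R) : measurable_fun [set: Y] f ->
  measurable_fun [set: Y] (fun y => enorm (f y)).
Proof.
move=> mf; rewrite /enorm; apply: measurableT_comp.
  exact: continuous_measurable_fun (@sqrt_continuous R).
exact: m_dotp.
Qed.
End meas.

Lemma m_C d : measurable_fun [set: d.-tuple R] (fun x => ((0 < enorm x) && (enorm x <= 1))%R).
Proof.
apply: measurable_and.
- by apply: measurable_fun_ltr => //; exact: m_enorm.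
- by apply: measurable_fun_ler => //; exact: m_enorm.
Qed.

Lemma m_N d : measurable_fun [set: d.-tuple R] (fun x => vscale (enorm x)^-1 x).
Proof.
apply: m_vscale => //; apply: measurableT_comp; first exact: m_inv.
exact: m_enorm.
Qed.

Lemma good_sphere d : good (@sphere_expect R d).
Proof.
have g1 := @good_trans _ _ _ _ _ _ _ (@good_iter _ _ _ good_leb d) (@m_C d) (@m_N d).
have c0 : (0 <= (fine (leb_int (fun x : d.-tuple R => if (enorm x <= 1)%R then 1%E else 0%E)))^-1)%R.
  rewrite invr_ge0; apply: fine_ge0; apply: (g_ge0 (@good_iter _ _ _ good_leb d)).
  by move=> x; case: ifP.
exact: (@good_scaleR _ _ _ _ g1 c0).
Qed.

Lemma good_ext d (T : measurableType d) (E E' : (T -> \bar R) -> \bar R) :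
  good E -> (forall h, E h = E' h) -> good E'.
Proof. by move=> gE eE; have -> : E' = E by apply/funext => h; rewrite eE. Qed.

Section unif.
Variable L : R.
Hypothesis L0 : (0 < L)%R.

Let S := [set t : R | (-L <= t <= L)%R].
Let mS : measurable S.
Proof. by rewrite /S -set_itvcc; exact: measurable_itv. Qed.

Lemma unif_mkcond h : unif_expect L h =
  ((2 * L)^-1)%:E * \int[lebesgue_measure]_t (if (-L <= t <= L)%R then h t else 0).
Proof.
rewrite /unif_expect integral_mkcond; congr (_ * _); apply: eq_integral => t _.
by rewrite /patch mem_setE.
Qed.

Lemma good_unif : good (unif_expect L).
Proof.
have mC : measurable_fun [set: R] (fun t : R => (-L <= t <= L)%R).
  by apply: measurable_and; apply: measurable_fun_ler.
have g1 := @good_trans _ _ _ _ _ _ id good_leb mC (@measurable_id _ _ _).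
have g2 := @good_scaleL _ _ _ ((2 * L)^-1)%R g1.
apply: (@good_ext _ _ _ _ (g2 _)); first by rewrite invr_ge0 mulr_ge0 // ltW.
by move=> h; rewrite unif_mkcond.
Qed.

Lemma unif_cst k : unif_expect L (fun _ => k) = k.
Proof.
rewrite /unif_expect (_ : [set t : R | (-L <= t <= L)%R] = `[(-L)%R, L]%classic); last by rewrite set_itvcc.
rewrite integral_cst; last exact: measurable_itv.
set m := (X in k * X).
have -> : m = (2 * L)%:E.
  rewrite /m; change (lebesgue_measure (`[(-L)%R, L]%classic : set R) = (2 * L)%:E).
  rewrite lebesgue_measure_itv /= lte_fin gtrN // -EFinB opprK.
  by congr EFin; rewrite mulr2n mulrDl mul1r.
by rewrite muleCA -EFinM mulVf ?mule1 // mulf_neq0 // gt_eqF.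
Qed.

Lemma unif_refl h : measurable_fun [set: R] h -> nonnegF h ->
  unif_expect L (fun t => h (- t)%R) = unif_expect L h.
Proof.
move=> mh h0; rewrite /unif_expect; congr (_ * _).
symmetry.
transitivity (\int[pushforward lebesgue_measure (-%R : R -> measurableTypeR R)]_(t in [set t : R | (-L <= t <= L)%R]) h t).
  by apply: eq_measure_integral => A mA _; exact: (esym (lebesgue_measureN mA)).
rewrite ge0_integral_pushforward //; last first.
  by apply: measurable_funS mh => //; exact: measurableT.
symmetry; congr (integral _ _ _); apply/seteqP; split => t /= /andP[a b]; apply/andP; split; lra.
Qed.
End unif.

Section main.
Variables (d n : nat) (w : R).

Definition pp (wv x : d.-tuple R) : R := (Num.max (dotp wv x) 0)%R.
Definition pm (wv x : d.-tuple R) : R := (Num.max (- dotp wv x) 0)%R.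
Definition ew (xs : n.-tuple (d.-tuple R)) (q : d.-tuple R) (i : 'I_n) : R :=
  (expR (- w * sqnorm (vsub (tnth xs i) q)))%R.
Definition Sv (u : d.-tuple R -> R) (xs : n.-tuple (d.-tuple R)) (q : d.-tuple R) : R :=
  ((\sum_(i < n) (u (tnth xs i) - u q) * ew xs q i) / (\sum_(j < n) ew xs q j))%R.

Lemma sig_lin (c1 c2 b : R) (u v : d.-tuple R -> R) xs q :
  sig_err w (fun x => c1 * u x + c2 * v x + b)%R xs q = ((c1 * Sv u xs q + c2 * Sv v xs q) ^+ 2)%R.
Proof.
rewrite /sig_err /Sv; congr (_ ^+ 2)%R.
rewrite (eq_bigr (fun i => c1 * ((u (tnth xs i) - u q) * ew xs q i) + c2 * ((v (tnth xs i) - v q) * ew xs q i)))%R; last first.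
  by move=> i _; rewrite /ew; ring.
by rewrite big_split /= -!mulr_sumr mulrDl !mulrA.
Qed.

Lemma dotp_pm (wv x : d.-tuple R) : dotp wv x = (pp wv x - pm wv x)%R.
Proof.
case: (lerP 0 (dotp wv x)) => h.
- have -> : pp wv x = dotp wv x by apply: max_l.
  have -> : (pm wv x = 0)%R by apply: max_r; rewrite oppr_le0.
  by rewrite subr0.
- have -> : (pp wv x = 0)%R by apply: max_r; rewrite ltW.
  have -> : (pm wv x = - dotp wv x)%R by apply: max_l; rewrite oppr_ge0 ltW.
  by rewrite sub0r opprK.
Qed.

Section measY.
Context dY (Y : measurableType dY).
Variables (wvf : Y -> d.-tuple R) (xsf : Y -> n.-tuple (d.-tuple R)) (qf : Y -> d.-tuple R).
Hypotheses (mwv : measurable_fun [set: Y] wvf) (mxs : measurable_fun [set: Y] xsf)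
  (mq : measurable_fun [set: Y] qf).

Lemma m_ew i : measurable_fun [set: Y] (fun y => ew (xsf y) (qf y) i).
Proof.
rewrite /ew; apply: measurableT_comp; first exact: measurable_expR.
apply: measurable_funM; first exact: measurable_cst.
by apply: m_dotp; apply: m_vsub => //; exact: m_tnthf.
Qed.

Lemma m_Sv (uu : d.-tuple R -> d.-tuple R -> R) :
  measurable_fun [set: d.-tuple R * d.-tuple R] (fun p => uu p.1 p.2) ->
  measurable_fun [set: Y] (fun y => Sv (uu (wvf y)) (xsf y) (qf y)).
Proof.
move=> mu.
have mu' (g : Y -> d.-tuple R) : measurable_fun [set: Y] g ->
    measurable_fun [set: Y] (fun y => uu (wvf y) (g y)).
  move=> mg; apply: (measurableT_comp (f := fun p => uu p.1 p.2) (g := fun y => (wvf y, g y))) => //.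
  exact: measurable_fun_pair.
rewrite /Sv; apply: measurable_funM.
- apply: measurable_sum => i; apply: measurable_funM; last exact: m_ew.
  by apply: measurable_funB; apply: mu' => //; exact: m_tnthf.
- apply: measurableT_comp; first exact: m_inv.
  by apply: measurable_sum => i; exact: m_ew.
Qed.
End measY.

Lemma m_pp : measurable_fun [set: d.-tuple R * d.-tuple R] (fun p => pp p.1 p.2).
Proof. by apply: measurable_maxr => //; apply: m_dotp. Qed.

Lemma m_pm : measurable_fun [set: d.-tuple R * d.-tuple R] (fun p => pm p.1 p.2).
Proof. by apply: measurable_maxr => //; apply: measurable_funN; apply: m_dotp. Qed.

Definition Phi2 (G : d.-tuple R * n.-tuple (d.-tuple R) -> \bar R) : \bar R :=
  sphere_expect (fun q => @iter_expect R _ (@sphere_expect R d) n (fun xs => G (q, xs))).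

Lemma good_Phi2 : good Phi2.
Proof. exact: (@good_pair _ _ _ _ _ _ (good_sphere d) (@good_iter _ _ _ (good_sphere d) n)). Qed.

Definition AA wv (z : d.-tuple R * n.-tuple (d.-tuple R)) := Sv (pp wv) z.2 z.1.
Definition BB wv (z : d.-tuple R * n.-tuple (d.-tuple R)) := Sv (pm wv) z.2 z.1.
Definition Q wv c1 c2 := Phi2 (fun z => ((c1 * AA wv z + c2 * BB wv z) ^+ 2)%:E).

Lemma mE2 dY (Y : measurableType dY) (f g : Y -> R) (a b : R) :
  measurable_fun [set: Y] f -> measurable_fun [set: Y] g ->
  measurable_fun [set: Y] (fun z => ((a * f z + b * g z) ^+ 2)%:E).
Proof.
move=> mf mg; apply/measurable_EFinP; apply: measurable_funX.
by apply: measurable_funD; apply: measurable_funM => //; exact: measurable_cst.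
Qed.

Lemma mE1 dY (Y : measurableType dY) (f : Y -> R) :
  measurable_fun [set: Y] f -> measurable_fun [set: Y] (fun z => (f z ^+ 2)%:E).
Proof. by move=> mf; apply/measurable_EFinP; apply: measurable_funX. Qed.

Lemma nnsq (T : Type) (f : T -> R) : nonnegF (fun z => (f z ^+ 2)%:E).
Proof. by move=> z; rewrite lee_fin sqr_ge0. Qed.

Lemma mAA wv : measurable_fun [set: d.-tuple R * n.-tuple (d.-tuple R)] (AA wv).
Proof.
exact: (@m_Sv _ _ (fun _ => wv) (fun z => z.2) (fun z => z.1) (measurable_cst _) measurable_snd measurable_fst pp m_pp).
Qed.

Lemma mBB wv : measurable_fun [set: d.-tuple R * n.-tuple (d.-tuple R)] (BB wv).
Proof.
exact: (@m_Sv _ _ (fun _ => wv) (fun z => z.2) (fun z => z.1) (measurable_cst _) measurable_snd measurable_fst pm m_pm).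
Qed.

Lemma mQ : measurable_fun [set: (d.-tuple R * R) * R] (fun p => Q p.1.1 p.1.2 p.2).
Proof.
rewrite /Q; apply: (@g_meas _ _ _ good_Phi2 _ _ (fun y : ((d.-tuple R * R) * R) * (d.-tuple R * n.-tuple (d.-tuple R)) => ((y.1.1.2 * AA y.1.1.1 y.2 + y.1.2 * BB y.1.1.1 y.2) ^+ 2)%:E)).
- apply/measurable_EFinP; apply: measurable_funX.
  apply: measurable_funD; apply: measurable_funM.
  + by do 2 apply: measurableT_comp => //.
  + apply: (@m_Sv _ _ (fun y => y.1.1.1) (fun y => y.2.2) (fun y => y.2.1) _ _ _ pp m_pp).
    * by do 3 apply: measurableT_comp => //.
    * by do 1 apply: measurableT_comp => //.
    * by do 1 apply: measurableT_comp => //.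
  + by do 1 apply: measurableT_comp => //.
  + apply: (@m_Sv _ _ (fun y => y.1.1.1) (fun y => y.2.2) (fun y => y.2.1) _ _ _ pm m_pm).
    * by do 3 apply: measurableT_comp => //.
    * by do 1 apply: measurableT_comp => //.
    * by do 1 apply: measurableT_comp => //.
- by move=> y; rewrite lee_fin sqr_ge0.
Qed.

Arguments mE2 {dY Y f g} a b.
Arguments mE1 {dY Y f}.
Arguments nnsq {T} f.

Lemma Q_ge0 wv c1 c2 : 0 <= Q wv c1 c2.
Proof. by apply: (g_ge0 good_Phi2) => z; rewrite lee_fin sqr_ge0. Qed.

Lemma Q_par wv c1 c2 : Q wv c1 c2 + Q wv c1 (- c2)%R =
  (2 * c1 ^+ 2)%:E * Phi2 (fun z => (AA wv z ^+ 2)%:E) +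
  (2 * c2 ^+ 2)%:E * Phi2 (fun z => (BB wv z ^+ 2)%:E).
Proof.
have mA := mAA wv; have mB := mBB wv.
have k1 : (0 <= 2 * c1 ^+ 2)%R by rewrite mulr_ge0 // sqr_ge0.
have k2 : (0 <= 2 * c2 ^+ 2)%R by rewrite mulr_ge0 // sqr_ge0.
rewrite /Q -(g_add good_Phi2 _ _ (mE2 c1 c2 mA mB) (mE2 c1 (- c2)%R mA mB) (nnsq _) (nnsq _)).
rewrite -(g_scale good_Phi2 _ _ k1 (mE1 mA) (nnsq _)) -(g_scale good_Phi2 _ _ k2 (mE1 mB) (nnsq _)).
rewrite -(g_add good_Phi2); last 4 first.
- by apply: measurable_funeM; exact: mE1.
- by apply: measurable_funeM; exact: mE1.
- by move=> z; apply: mule_ge0; rewrite lee_fin ?sqr_ge0.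
- by move=> z; apply: mule_ge0; rewrite lee_fin ?sqr_ge0.
congr Phi2; apply/funext => z; rewrite -!EFinM -!EFinD; congr EFin; ring.
Qed.

End main.

Section final.
Variables (d n : nat) (w L : R).
Hypothesis L0 : (0 < L)%R.

Local Notation U := (unif_expect L).
Let gU := good_unif L L0.
Let Qw := @Q d n w.

Definition Pf (l : R) : \bar R := (2 * l ^+ 2)%:E.

Lemma mPa (a : \bar R) : measurable_fun [set: R] (fun l : R => Pf l * a).
Proof.
under eq_fun do rewrite muleC.
apply: measurable_funeM; apply/measurable_EFinP; apply: measurable_funM.
- exact: measurable_cst.
- exact: measurable_funX.
Qed.

Lemma Pa_ge0 (a : \bar R) : 0 <= a -> nonnegF (fun l : R => Pf l * a).
Proof. by move=> a0 l; apply: mule_ge0 => //; rewrite lee_fin mulr_ge0 // sqr_ge0. Qed.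

Lemma Q_meas2 wv c1 : measurable_fun [set: R] (fun c2 => Qw wv c1 c2).
Proof.
apply: (measurableT_comp (f := fun p => Qw p.1.1 p.1.2 p.2) (g := fun c2 : R => ((wv, c1), c2))).
  exact: mQ.
by apply: measurable_fun_pair => //; exact: measurable_cst.
Qed.

Lemma Q_meas_d wv : measurable_fun [set: R] (fun l => Qw wv l (- l)%R).
Proof.
apply: (measurableT_comp (f := fun p => Qw p.1.1 p.1.2 p.2) (g := fun l : R => ((wv, l), (- l)%R))).
  exact: mQ.
apply: measurable_fun_pair; last exact: oppr_measurable.
by apply: measurable_fun_pair => //; exact: measurable_cst.
Qed.

Lemma Q_meas_p wv : measurable_fun [set: R * R] (fun p => Qw wv p.1 p.2).
Proof.
apply: (measurableT_comp (f := fun p => Qw p.1.1 p.1.2 p.2) (g := fun p : R * R => ((wv, p.1), p.2))).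
  exact: mQ.
apply: measurable_fun_pair => //.
by apply: measurable_fun_pair => //; exact: measurable_cst.
Qed.

Lemma perwv wv : U (fun l => Qw wv l (- l)%R) <=
  U (fun l1 => U (fun l2 => Qw wv l1 l2)) + U (fun l1 => U (fun l2 => Qw wv l1 l2)).
Proof.
set a := @Phi2 d n (fun z => (@AA d n w wv z ^+ 2)%:E).
set b := @Phi2 d n (fun z => (@BB d n w wv z ^+ 2)%:E).
have a0 : 0 <= a by apply: (g_ge0 (@good_Phi2 d n)); exact: nnsq.
have b0 : 0 <= b by apply: (g_ge0 (@good_Phi2 d n)); exact: nnsq.
have QP c1 c2 : Qw wv c1 c2 + Qw wv c1 (- c2)%R = Pf c1 * a + Pf c2 * b.
  exact: Q_par.
have nQ c1 : nonnegF (fun c2 => Qw wv c1 c2) by move=> c2; exact: Q_ge0.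
have nQn c1 : nonnegF (fun c2 => Qw wv c1 (- c2)%R) by move=> c2; exact: Q_ge0.
have mQn c1 : measurable_fun [set: R] (fun c2 => Qw wv c1 (- c2)%R).
  apply: (measurableT_comp (f := fun c2 => Qw wv c1 c2) (g := fun c2 : R => (- c2)%R)).
    exact: Q_meas2.
  exact: oppr_measurable.
have Pf0 l : 0 <= Pf l by rewrite lee_fin mulr_ge0 // sqr_ge0.
have mca c1 : measurable_fun [set: R] (fun _ : R => Pf c1 * a) by exact: measurable_cst.
have nca c1 : nonnegF (fun _ : R => Pf c1 * a) by move=> _; exact: mule_ge0.
set K := U (fun l2 => Pf l2 * b).
have K0 : 0 <= K by apply: (g_ge0 gU); exact: Pa_ge0.
have inner c1 : U (fun c2 => Qw wv c1 c2) + U (fun c2 => Qw wv c1 c2) = Pf c1 * a + K.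
  rewrite -{2}(unif_refl L (fun c2 => Qw wv c1 c2) (Q_meas2 wv c1) (nQ c1)).
  rewrite -(g_add gU _ _ (Q_meas2 wv c1) (mQn c1) (nQ c1) (nQn c1)).
  rewrite (_ : (fun t => Qw wv c1 t + Qw wv c1 (- t)%R) = fun t => Pf c1 * a + Pf t * b); last first.
    by apply/funext => t; exact: QP.
  by rewrite (g_add gU _ _ (mca c1) (mPa b) (nca c1) (Pa_ge0 _ b0)) (unif_cst L L0).
have mH : measurable_fun [set: R] (fun c1 => U (fun c2 => Qw wv c1 c2)).
  apply: (@g_meas _ _ _ gU _ _ (fun p : R * R => Qw wv p.1 p.2)); first exact: Q_meas_p.
  by move=> p; exact: Q_ge0.
have nH : nonnegF (fun c1 => U (fun c2 => Qw wv c1 c2)).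
  by move=> c1; apply: (g_ge0 gU); exact: nQ.
rewrite -(g_add gU _ _ mH mH nH nH).
rewrite (_ : (fun c1 => U (fun c2 => Qw wv c1 c2) + U (fun c2 => Qw wv c1 c2)) = fun c1 => Pf c1 * a + K); last first.
  by apply/funext => c1; exact: inner.
rewrite (g_add gU _ _ (mPa a) (measurable_cst _) (Pa_ge0 _ a0) (fun _ => K0)) (unif_cst L L0).
have -> : K = U (fun l2 => Pf l2 * b) by [].
rewrite -(g_add gU _ _ (mPa a) (mPa b) (Pa_ge0 _ a0) (Pa_ge0 _ b0)).
have mS : measurable_fun [set: R] (fun l => Pf l * a + Pf l * b).
  by apply: emeasurable_funD; exact: mPa.
apply: (g_le gU _ _ (Q_meas_d wv) mS) => [l|l].
- exact: Q_ge0.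
- rewrite (_ : Pf l * b = Pf (- l)%R * b); last by rewrite /Pf sqrrN.
  have := QP l (- l)%R; rewrite opprK => <-.
  by apply: leeDl; exact: Q_ge0.
Qed.

Lemma EP : L_sig n w (@D_plus R d L) = sphere_expect (fun wv => U (fun l1 => U (fun l2 => Qw wv l1 l2))).
Proof.
rewrite /L_sig /D_plus; congr sphere_expect; apply/funext => wv.
congr unif_expect; apply/funext => l1; congr unif_expect; apply/funext => l2.
rewrite -[RHS](unif_cst L L0); congr unif_expect; apply/funext => b.
rewrite /Qw /Q /Phi2; congr sphere_expect; apply/funext => q.
congr iter_expect; apply/funext => xs; congr EFin.
exact: (@sig_lin d n w l1 l2 b (@pp d wv) (@pm d wv) xs q).
Qed.

Lemma EA : L_sig n w (@D_aff R d L) = sphere_expect (fun wv => U (fun l => Qw wv l (- l)%R)).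
Proof.
rewrite /L_sig /D_aff; congr sphere_expect; apply/funext => wv.
congr unif_expect; apply/funext => l.
rewrite -[RHS](unif_cst L L0); congr unif_expect; apply/funext => b.
rewrite /Qw /Q /Phi2; congr sphere_expect; apply/funext => q.
congr iter_expect; apply/funext => xs; congr EFin.
rewrite -(@sig_lin d n w l (- l)%R b (@pp d wv) (@pm d wv) xs q).
congr sig_err; apply/funext => x.
by rewrite (@dotp_pm d wv x); ring.
Qed.

Lemma final_ineq : ((1 / 2 : R)%:E * L_sig n w (@D_aff R d L)) <= L_sig n w (@D_plus R d L).
Proof.
rewrite EA EP.
set H := fun wv => U (fun l1 => U (fun l2 => Qw wv l1 l2)).
set RA := fun wv => U (fun l => Qw wv l (- l)%R).
have gS := good_sphere d.
have mH : measurable_fun [set: d.-tuple R] H.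
  apply: (@g_meas _ _ _ gU _ _ (fun p : d.-tuple R * R => U (fun t => Qw p.1 p.2 t))).
  - apply: (@g_meas _ _ _ gU _ _ (fun p : (d.-tuple R * R) * R => Qw p.1.1 p.1.2 p.2)).
      exact: mQ.
    by move=> p; exact: Q_ge0.
  - by move=> p; apply: (g_ge0 gU) => t; exact: Q_ge0.
have mRA : measurable_fun [set: d.-tuple R] RA.
  apply: (@g_meas _ _ _ gU _ _ (fun p : d.-tuple R * R => Qw p.1 p.2 (- p.2)%R)).
  - apply: (measurableT_comp (f := fun p => Qw p.1.1 p.1.2 p.2) (g := fun p : d.-tuple R * R => ((p.1, p.2), (- p.2)%R))).
      exact: mQ.
    apply: measurable_fun_pair; last exact: measurableT_comp (@oppr_measurable R setT) measurable_snd.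
    by apply: measurable_fun_pair.
  - by move=> p; exact: Q_ge0.
have nH : nonnegF H by move=> wv; apply: (g_ge0 gU) => t; apply: (g_ge0 gU) => t'; exact: Q_ge0.
have nRA : nonnegF RA by move=> wv; apply: (g_ge0 gU) => t; exact: Q_ge0.
have le1 : sphere_expect RA <= sphere_expect (fun wv => H wv + H wv).
  apply: (g_le gS _ _ mRA (emeasurable_funD mH mH) nRA) => wv; exact: perwv.
rewrite (g_add gS _ _ mH mH nH nH) in le1.
have X0 : 0 <= sphere_expect H by exact: (g_ge0 gS).
apply: le_trans (lee_wpmul2l _ le1) _; first by rewrite lee_fin.
rewrite ge0_muleDr // -ge0_muleDl ?lee_fin // -EFinD.
rewrite (_ : (1 / 2 + 1 / 2 = 1 :> R)%R) ?mul1e //.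
by rewrite -mulrDl -(natrD R 1 1) divff.
Qed.

End final.

End S.

Local Open Scope ring_scope.

Theorem mainTheorem10 (R : realType) (d : nat) (L : R) (n : nat) (w : R) :
  (0 < d)%N -> 0 < L -> (1 <= n)%N ->
  (((1 / 2 : R)%:E * L_sig n w (@D_aff R d L)) <= L_sig n w (@D_plus R d L))%E.
Proof. by move=> _ L0 _; exact: (@final_ineq R d n w L L0). Qed.
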